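(* Let $d>0$ and let $I\subseteq\mathbb{R}$ be a nonempty, non-singleton interval with $\ell(I)\geq d$. (1) Let $g: I\to\mathbb{R}$ be increasing and $k: I\to\mathbb{R}$ bounded, such that $\mathscr{H}_{x_d}(g)\geq\mathscr{H}(k)$ for every $x\in I$. Then both $g+k$ and $g-k$ are $d$-periodically increasing. (2) Conversely, suppose $\ell(I)>2d$ and let $f: I\to\mathbb{R}$ be $d$-periodically increasing such that there is $l>0$ with $f(x+nd)-f(x+(n-1)d)=l$ for all $x\in I$ and $n\in\mathbb{N}$ with $x+(n-1)d,\ x+nd\in I$. Then $f=g+h$ where $g: I\to\mathbb{R}$ is increasing and $h: I\to\mathbb{R}$ is periodic with period $d$, i.e. $h(x+d)=h(x)$ whenever $x,x+d\in I$.
   Context: $\ell(I)$ denotes the length of $I$. A function $f: I\to\mathbb{R}$ is $d$-periodically increasing if $f(x)\leq f(y)$ for all $x,y\in I$ with $y-x\geq d$. For $x\in I$ and $I_d=[x,x+d]\cap I$, the extended height is $\mathscr{H}_{x_d}(f)=\sup_{u,v\in I_d}|f(u)-f(v)|$, and the height is $\mathscr{H}(f)=\sup_{u,v\in I}|f(u)-f(v)|$. *)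

(* Defs.v *)
From Stdlib Require Import Reals.
From Coquelicot Require Import Coquelicot.
Open Scope R_scope.

Definition is_interval (I : R -> Prop) : Prop :=
  forall x y z, I x -> I z -> x <= y -> y <= z -> I y.

Definition nondegenerate (I : R -> Prop) : Prop :=
  exists x y, I x /\ I y /\ x <> y.

Definition len (I : R -> Prop) : Rbar :=
  Lub_Rbar (fun r => exists x y, I x /\ I y /\ r = y - x).

Definition increasing_on (I : R -> Prop) (g : R -> R) : Prop :=
  forall x y, I x -> I y -> x <= y -> g x <= g y.

Definition bounded_on (I : R -> Prop) (k : R -> R) : Prop :=
  exists M, forall x, I x -> Rabs (k x) <= M.

Definition d_per_increasing (d : R) (I : R -> Prop) (f : R -> R) : Prop :=
  forall x y, I x -> I y -> y - x >= d -> f x <= f y.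

Definition Id (I : R -> Prop) (x d : R) : R -> Prop :=
  fun u => x <= u <= x + d /\ I u.

Definition height (J : R -> Prop) (f : R -> R) : Rbar :=
  Lub_Rbar (fun r => exists u v, J u /\ J v /\ r = Rabs (f u - f v)).

Definition ext_height (I : R -> Prop) (d x : R) (f : R -> R) : Rbar :=
  height (Id I x d) f.

(* Main.v *)
Require Import Defs.
From Stdlib Require Import Reals Lra.
From Coquelicot Require Import Coquelicot.
Open Scope R_scope.

Lemma part1_key (d : R) (I : R -> Prop) (g k : R -> R) x y :
  0 < d -> is_interval I -> increasing_on I g ->
  (forall x, I x -> Rbar_le (height I k) (ext_height I d x g)) ->
  I x -> I y -> y - x >= d -> Rabs (k x - k y) <= g y - g x.
Proof.
  intros Hd HI Hg Hh Ix Iy Hxy.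
  assert (Ixd : I (x + d)) by (apply (HI x (x+d) y); [exact Ix|exact Iy|lra|lra]).
  assert (H1 : Rbar_le (Finite (Rabs (k x - k y))) (height I k)).
  { unfold height. destruct (Lub_Rbar_correct (fun r => exists u v, I u /\ I v /\ r = Rabs (k u - k v))) as [Hub _].
    apply Hub. exists x, y; auto. }
  assert (H2 : Rbar_le (ext_height I d x g) (Finite (g (x + d) - g x))).
  { unfold ext_height, height.
    destruct (Lub_Rbar_correct (fun r => exists u v, Id I x d u /\ Id I x d v /\ r = Rabs (g u - g v))) as [_ Hl].
    apply Hl. intros r [u [v [[Hu Iu] [[Hv Iv] ->]]]].
    simpl.
    assert (g x <= g u) by (apply Hg; try assumption; lra).
    assert (g u <= g (x+d)) by (apply Hg; try assumption; lra).
    assert (g x <= g v) by (apply Hg; try assumption; lra).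
    assert (g v <= g (x+d)) by (apply Hg; try assumption; lra).
    apply Rabs_le; lra. }
  pose proof (Rbar_le_trans _ _ _ H1 (Rbar_le_trans _ _ _ (Hh x Ix) H2)) as H.
  simpl in H.
  assert (g (x+d) <= g y) by (apply Hg; auto; lra).
  lra.
Qed.

Theorem theorem3p1 (d : R) (I : R -> Prop) :
  0 < d -> is_interval I -> nondegenerate I -> Rbar_le (Finite d) (len I) ->
  (forall g k : R -> R,
     increasing_on I g -> bounded_on I k ->
     (forall x, I x -> Rbar_le (height I k) (ext_height I d x g)) ->
     d_per_increasing d I (fun x => g x + k x) /\
     d_per_increasing d I (fun x => g x - k x)) /\
  (Rbar_lt (Finite (2 * d)) (len I) ->
   forall f : R -> R, d_per_increasing d I f ->
   (exists l, 0 < l /\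
      forall x (n : nat), I x -> I (x + INR n * d) -> I (x + (INR n - 1) * d) ->
        f (x + INR n * d) - f (x + (INR n - 1) * d) = l) ->
   exists g h : R -> R,
     increasing_on I g /\
     (forall x, I x -> I (x + d) -> h (x + d) = h x) /\
     (forall x, I x -> f x = g x + h x)).
Proof.
  intros Hd HI _ _. split.
  - intros g k Hg _ Hh. split; intros x y Ix Iy Hxy;
      pose proof (part1_key d I g k x y Hd HI Hg Hh Ix Iy Hxy) as H;
      pose proof (Rle_abs (k x - k y)); pose proof (Rle_abs (-(k x - k y)));
      rewrite Rabs_Ropp in *; lra.
  - intros _ f _ [l [Hl Hf]].
    exists (fun x => l * x / d), (fun x => f x - l * x / d).
    split; [|split].
    + intros x y _ _ Hxy. unfold Rdiv.
      apply Rmult_le_compat_r; [left; apply Rinv_0_lt_compat; lra|].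
      apply Rmult_le_compat_l; lra.
    + intros x Ix Ixd.
      pose proof (Hf x 1%nat Ix) as H. simpl INR in H.
      replace (x + 1 * d) with (x + d) in H by ring.
      replace (x + (1 - 1) * d) with x in H by ring.
      specialize (H Ixd Ix).
      replace (l * (x + d) / d) with (l * x / d + l) by (field; lra).
      lra.
    + intros x _. ring.
Qed.
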